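(* Let $\mathbb{S}:=\mathbb{R}/\mathbb{Z}$ and let $\gamma_{3_1}:\mathbb{S}\to\mathbb{R}^3$ be the ideal trefoil, parameterized with constant speed such that $\gamma_{3_1}(0)$ is the outer point of the trefoil on a symmetry axis. Assume: (i) $\gamma_{3_1}$ admits a contact function $\sigma$ (see context); (ii) $\gamma_{3_1}$ is symmetric under a $120^\circ$ rotation about an axis and under three $180^\circ$ rotations about axes perpendicular to it; (iii) with $s_i:=\sigma^i(0)$, the tuple $b_9=(s_0,\dots,s_8)$ is a nine-cycle, i.e. $\sigma^9(0)=0$, and as the parameter runs from $0$ to $1$ the curve passes through the points $s_i$ in the order $s_0,s_7,s_5,s_3,s_1,s_8,s_6,s_4,s_2$. Then for indices $i,j$ (taken mod $9$), $\sigma$ maps the parameter interval $[s_i,s_j]$ onto $[s_{i+1},s_{j+1}]$. In particular, defining the pieces $\beta_1:=\gamma_{3_1}|_{[s_0,s_7]}$, $\beta_2:=\gamma_{3_1}|_{[s_6,s_4]}$, $\beta_3:=\gamma_{3_1}|_{[s_3,s_1]}$, $\tilde\beta_1:=\gamma_{3_1}|_{[s_2,s_0]}$, $\tilde\beta_2:=\gamma_{3_1}|_{[s_8,s_6]}$, $\tilde\beta_3:=\gamma_{3_1}|_{[s_5,s_3]}$, $\alpha_1:=\gamma_{3_1}|_{[s_1,s_8]}$, $\alpha_2:=\gamma_{3_1}|_{[s_7,s_5]}$, $\alpha_3:=\gamma_{3_1}|_{[s_4,s_2]}$, following the contact in the $\sigma$ direction gives the sequence $\alpha_1\to\tilde\beta_1\to\beta_3\to\alpha_3\to\tilde\beta_3\to\beta_2\to\alpha_2\to\tilde\beta_2\to\beta_1\to\alpha_1$,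 each piece being in one-to-one contact with the next.
   Context: For a $C^1$ closed curve $\gamma:\mathbb{S}\to\mathbb{R}^3$, the thickness is $\Delta[\gamma]:=\inf R(\gamma(s),\gamma(\sigma),\gamma(\tau))$ over pairwise distinct $s,\sigma,\tau\in\mathbb{S}$, where $R(x,y,z)$ is the radius of the smallest circle through $x,y,z$. The ideal trefoil minimizes length divided by thickness in the trefoil knot class. Parameters $s,t$ are in contact if $|\gamma(t)-\gamma(s)|=2\Delta[\gamma]$ and $\gamma(t)-\gamma(s)$ is orthogonal to $\gamma'(s)$ and $\gamma'(t)$. A contact function is a continuous, bijective, orientation-preserving map $\sigma:\mathbb{S}\to\mathbb{S}$ such that $\gamma_{3_1}(s)-\gamma_{3_1}(\sigma(s))$ is a contact chord for every $s$. Intervals $[a,b]$ in $\mathbb{S}$ denote the arc from $a$ to $b$ in the positive direction; $\sigma^i$ is the $i$-fold composition. *)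

(* Defs.v *)
From Stdlib Require Import Reals Lra.
From Coquelicot Require Import Coquelicot.
Open Scope R_scope.

Definition vec := (R * R * R)%type.
Definition vx (v : vec) : R := fst (fst v).
Definition vy (v : vec) : R := snd (fst v).
Definition vz (v : vec) : R := snd v.
Definition mkv (a b c : R) : vec := ((a, b), c).
Definition vadd (u v : vec) : vec := mkv (vx u + vx v) (vy u + vy v) (vz u + vz v).
Definition vsub (u v : vec) : vec := mkv (vx u - vx v) (vy u - vy v) (vz u - vz v).
Definition vscal (a : R) (v : vec) : vec := mkv (a * vx v) (a * vy v) (a * vz v).
Definition dot (u v : vec) : R := vx u * vx v + vy u * vy v + vz u * vz v.
Definition cross (u v : vec) : vec :=
  mkv (vy u * vz v - vz u * vy v) (vz u * vx v - vx u * vz v) (vx u * vy v - vy u * vx v).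
Definition vnorm (v : vec) : R := sqrt (dot v v).

(** * The circle S = R/Z, represented through real representatives *)
Definition same_S (x y : R) : Prop := exists k : Z, x - y = IZR k.

(* x lies on the arc [a,b] of S, i.e. the arc from a to b in the positive
   direction (frac_part is the representative in [0,1)). *)
Definition in_arc (a b x : R) : Prop := frac_part (x - a) <= frac_part (b - a).

(** * Closed curves gamma : S -> R^3, as 1-periodic maps R -> R^3 *)
Definition periodic1 (g : R -> vec) : Prop := forall t, g (t + 1) = g t.

Definition deriv (g : R -> vec) (t : R) : vec :=
  mkv (Derive (fun u => vx (g u)) t) (Derive (fun u => vy (g u)) t)
      (Derive (fun u => vz (g u)) t).

Definition C1_closed (g : R -> vec) : Prop :=
  periodic1 g /\
  forall t,
    (ex_derive (fun u => vx (g u)) t /\ ex_derive (fun u => vy (g u)) t /\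
     ex_derive (fun u => vz (g u)) t) /\
    (continuous (Derive (fun u => vx (g u))) t /\
     continuous (Derive (fun u => vy (g u))) t /\
     continuous (Derive (fun u => vz (g u))) t).

Definition simple_closed (g : R -> vec) : Prop :=
  forall s t, g s = g t -> same_S s t.

Definition length (g : R -> vec) : R := RInt (fun t => vnorm (deriv g t)) 0 1.

(* is_crad x y z r : r is the (finite) radius of the smallest circle through
   x, y, z.  Pairwise distinct collinear points have infinite radius (a line),
   hence no finite radius. *)
Definition is_crad (x y z : vec) (r : R) : Prop :=
  (x = y /\ y = z /\ r = 0) \/
  (x = y /\ y <> z /\ r = vnorm (vsub x z) / 2) \/
  (y = z /\ x <> y /\ r = vnorm (vsub x y) / 2) \/
  (x = z /\ x <> y /\ r = vnorm (vsub x y) / 2) \/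
  (x <> y /\ y <> z /\ x <> z /\
   cross (vsub y x) (vsub z x) <> mkv 0 0 0 /\
   r = vnorm (vsub x y) * vnorm (vsub y z) * vnorm (vsub z x)
       / (2 * vnorm (cross (vsub y x) (vsub z x)))).

(* Delta[gamma] = inf R(gamma s, gamma sigma, gamma tau) over pairwise distinct
   parameters of S (infinite radii do not affect the infimum). *)
Definition thickness (g : R -> vec) : Rbar :=
  Glb_Rbar (fun r => exists s u t,
    ~ same_S s u /\ ~ same_S u t /\ ~ same_S s t /\ is_crad (g s) (g u) (g t) r).

Definition ambient_isotopic (g1 g2 : R -> vec) : Prop :=
  exists H : R -> vec -> vec,
    (forall p : R * vec, continuous (fun q : R * vec => H (fst q) (snd q)) p) /\
    (forall x, H 0 x = x) /\
    (forall t, 0 <= t <= 1 -> exists G : vec -> vec,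
        (forall x, G (H t x) = x) /\ (forall y, H t (G y) = y) /\
        (forall y, continuous G y)) /\
    (forall s, exists s', H 1 (g1 s) = g2 s') /\
    (forall s', exists s, H 1 (g1 s) = g2 s').

Definition std_trefoil (t : R) : vec :=
  mkv (sin (2 * PI * t) + 2 * sin (4 * PI * t))
      (cos (2 * PI * t) - 2 * cos (4 * PI * t))
      (- sin (6 * PI * t)).

Definition is_trefoil (g : R -> vec) : Prop :=
  C1_closed g /\ simple_closed g /\ ambient_isotopic std_trefoil g.

Definition ideal_trefoil (g : R -> vec) : Prop :=
  is_trefoil g /\
  exists d, thickness g = Finite d /\ 0 < d /\
    forall h e, is_trefoil h -> thickness h = Finite e -> 0 < e ->
      length g / d <= length h / e.

Definition constant_speed (g : R -> vec) : Prop :=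
  exists c, forall t, vnorm (deriv g t) = c.

(* rotation by angle th about the axis through p with unit direction u (Rodrigues) *)
Definition rot (p u : vec) (th : R) (x : vec) : vec :=
  let v := vsub x p in
  vadd p (vadd (vadd (vscal (cos th) v) (vscal (sin th) (cross u v)))
               (vscal (dot u v * (1 - cos th)) u)).

Definition invariant_under (g : R -> vec) (f : vec -> vec) : Prop :=
  forall t, exists t', f (g t) = g t'.

Definition trefoil_symmetric_at_0 (g : R -> vec) : Prop :=
  exists p u w1 w2 w3 : vec,
    vnorm u = 1 /\ vnorm w1 = 1 /\ vnorm w2 = 1 /\ vnorm w3 = 1 /\
    dot u w1 = 0 /\ dot u w2 = 0 /\ dot u w3 = 0 /\
    w1 <> w2 /\ w1 <> vscal (-1) w2 /\ w1 <> w3 /\ w1 <> vscal (-1) w3 /\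
    w2 <> w3 /\ w2 <> vscal (-1) w3 /\
    invariant_under g (rot p u (2 * PI / 3)) /\
    invariant_under g (rot p w1 PI) /\
    invariant_under g (rot p w2 PI) /\
    invariant_under g (rot p w3 PI) /\
    (exists l, g 0 = vadd p (vscal l w1)) /\
    (forall t l, g t = vadd p (vscal l w1) -> vnorm (vsub (g t) p) <= vnorm (vsub (g 0) p)).

Definition in_contact (g : R -> vec) (s t : R) : Prop :=
  exists d, thickness g = Finite d /\
    vnorm (vsub (g t) (g s)) = 2 * d /\
    dot (vsub (g t) (g s)) (deriv g s) = 0 /\
    dot (vsub (g t) (g s)) (deriv g t) = 0.

(* A map sigma : S -> S is represented by a continuous lift F : R -> R.
   Well-defined on S, bijective on S, orientation preserving (the lift is
   nondecreasing), and every chord gamma(s) - gamma(sigma s) is a contact. *)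
Definition contact_function (g : R -> vec) (F : R -> R) : Prop :=
  (forall x, continuous F x) /\
  (forall x y, same_S x y -> same_S (F x) (F y)) /\
  (forall x y, same_S (F x) (F y) -> same_S x y) /\
  (forall y, exists x, same_S (F x) y) /\
  (forall x y, x <= y -> F x <= F y) /\
  (forall s, in_contact g s (F s)).

Definition sseq (F : R -> R) (i : nat) : R := Nat.iter i F 0.

Definition rep (x : R) : R := frac_part x.

Definition maps_arc_onto (F : R -> R) (a b c d : R) : Prop :=
  forall y, in_arc c d y <-> exists x, in_arc a b x /\ same_S (F x) y.

(* Main.v *)
Require Import Defs.
From Stdlib Require Import Reals.
From Coquelicot Require Import Coquelicot.
Open Scope R_scope.


From Stdlib Require Import Lra Lia ZArith.

Lemma no_int_between (z n : Z) : IZR n < IZR z < IZR n + 1 -> False.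
Proof.
  intros [H1 H2]. apply lt_IZR in H1. rewrite <- plus_IZR in H2.
  apply lt_IZR in H2. lia.
Qed.

Lemma frac_char (x a : R) (k : Z) : 0 <= a < 1 -> x - a = IZR k -> frac_part x = a.
Proof.
  intros Ha Hk. destruct (base_fp x) as [H1 H2].
  assert (E : frac_part x - a = IZR (k - Int_part x)).
  { rewrite minus_IZR. unfold frac_part in *. lra. }
  destruct (Req_dec (frac_part x) a) as [|Hne]; auto. exfalso.
  destruct (Rlt_or_le (frac_part x) a).
  - apply (no_int_between (k - Int_part x) (-1)). rewrite <- E.
    change (IZR (-1)) with (-1). lra.
  - apply (no_int_between (k - Int_part x) 0). rewrite <- E. simpl. lra.
Qed.

Lemma frac_shift (x : R) (k : Z) : frac_part (x + IZR k) = frac_part x.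
Proof.
  apply frac_char with (k := (Int_part x + k)%Z).
  - destruct (base_fp x); lra.
  - rewrite plus_IZR. unfold frac_part. ring.
Qed.

Lemma frac_int (x : R) : exists k, x - frac_part x = IZR k.
Proof. exists (Int_part x). unfold frac_part. ring. Qed.

Section F.
Variable F : R -> R.
Hypothesis Hcont : forall x, continuous F x.
Hypothesis Hwd : forall x y, same_S x y -> same_S (F x) (F y).
Hypothesis Hinj : forall x y, same_S (F x) (F y) -> same_S x y.
Hypothesis Hmono : forall x y, x <= y -> F x <= F y.

Lemma my_ivt u v t : u <= v -> F u <= t <= F v -> exists x, u <= x <= v /\ F x = t.
Proof.
  intros Huv Ht.
  assert (Hc : continuity F).
  { intro x. apply continuity_pt_filterlim. apply Hcont. }
  destruct (IVT_gen F u v t Hc) as [x [Hx Fx]].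
  - rewrite Rmin_left, Rmax_right; lra.
  - exists x. rewrite Rmin_left, Rmax_right in Hx; auto.
Qed.

Lemma F_per x : F (x + 1) = F x + 1.
Proof.
  destruct (Hwd (x+1) x) as [k Hk].
  { exists 1%Z. simpl. ring. }
  assert (k = 1)%Z.
  { destruct (Z_le_gt_dec k 0) as [Hle|Hgt].
    - apply IZR_le in Hle. simpl in Hle.
      pose proof (Hmono x (x + /2) ltac:(lra)).
      pose proof (Hmono (x + /2) (x + 1) ltac:(lra)).
      destruct (Hinj x (x + /2)) as [j Hj].
      { exists 0%Z. simpl. lra. }
      exfalso. apply (no_int_between j (-1)). rewrite <- Hj.
      change (IZR (-1)) with (-1). lra.
    - destruct (Z_le_gt_dec k 1) as [Hle1|Hgt1]; [lia|].
      assert (H2 : (2 <= k)%Z) by lia. apply IZR_le in H2. simpl in H2.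
      destruct (my_ivt x (x+1) (F x + 1)) as [z [Hz Fz]]; [lra|lra|].
      assert (z <> x) by (intro; subst; lra).
      assert (z <> x + 1) by (intro; subst; lra).
      destruct (Hinj z x) as [j Hj].
      { exists 1%Z. simpl. lra. }
      exfalso. apply (no_int_between j 0). rewrite <- Hj. simpl. lra. }
  subst. simpl in Hk. lra.
Qed.

Lemma F_strict x y : x < y -> F x < F y.
Proof.
  intros Hxy. destruct (Hmono x y ltac:(lra)) as [|E]; auto. exfalso.
  destruct (Rlt_or_le (y - x) 1).
  - destruct (Hinj x y) as [j Hj]. { exists 0%Z. simpl. lra. }
    apply (no_int_between j (-1)). rewrite <- Hj. change (IZR (-1)) with (-1). lra.
  - pose proof (Hmono (x+1) y ltac:(lra)). rewrite F_per in H0. lra.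
Qed.

Lemma F_nat x n : F (x + INR n) = F x + INR n.
Proof.
  induction n. - simpl. rewrite !Rplus_0_r. auto.
  - rewrite S_INR. replace (x + (INR n + 1)) with ((x + INR n) + 1) by ring.
    rewrite F_per, IHn. ring.
Qed.

Lemma F_Z x z : F (x + IZR z) = F x + IZR z.
Proof.
  destruct (Z_le_gt_dec 0 z).
  - rewrite <- (Z2Nat.id z) by lia. rewrite <- INR_IZR_INZ. apply F_nat.
  - assert (E : z = (- Z.of_nat (Z.to_nat (- z)))%Z) by lia.
    rewrite E, opp_IZR, <- INR_IZR_INZ.
    set (n := Z.to_nat (-z)).
    pose proof (F_nat (x - INR n) n).
    replace (x - INR n + INR n) with x in H by ring.
    replace (x + - INR n) with (x - INR n) by ring. lra.
Qed.

Lemma main_arc a b : maps_arc_onto F a b (F a) (F b).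
Proof.
  unfold maps_arc_onto, in_arc. intro y.
  set (f := frac_part (b - a)).
  destruct (base_fp (b - a)) as [Hf0 Hf1]. fold f in Hf0, Hf1.
  destruct (frac_int (b - a)) as [m Hm]. fold f in Hm.
  assert (Eb : b = (a + f) + IZR m) by lra.
  pose proof (Hmono a (a + f) ltac:(lra)).
  pose proof (F_strict (a + f) (a + 1) ltac:(lra)). rewrite F_per in H0.
  assert (Ee : frac_part (F b - F a) = F (a + f) - F a).
  { rewrite Eb, F_Z. replace (F (a + f) + IZR m - F a) with ((F (a+f) - F a) + IZR m) by ring.
    rewrite frac_shift. apply frac_char with (k := 0%Z); simpl; lra. }
  rewrite Ee. split.
  - intros Hy.
    destruct (base_fp (y - F a)) as [Hg0 Hg1].
    destruct (my_ivt a (a + f) (F a + frac_part (y - F a))) as [x [Hx Fx]]; [lra|lra|].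
    exists x. split.
    + rewrite (frac_char (x - a) (x - a) 0); simpl; lra.
    + destruct (frac_int (y - F a)) as [k Hk]. exists (- k)%Z.
      rewrite opp_IZR. lra.
  - intros [x [Hx [k Hk]]].
    set (g := frac_part (x - a)) in *.
    destruct (base_fp (x - a)) as [Hg0 Hg1]. fold g in Hg0, Hg1.
    destruct (frac_int (x - a)) as [n Hn]. fold g in Hn.
    assert (Ex : x = (a + g) + IZR n) by lra.
    rewrite Ex, F_Z in Hk.
    pose proof (Hmono a (a + g) ltac:(lra)).
    pose proof (Hmono (a + g) (a + f) ltac:(lra)).
    replace (y - F a) with ((F (a + g) - F a) + IZR (- (k - n))).
    + rewrite frac_shift. rewrite (frac_char (F (a+g) - F a) (F (a+g) - F a) 0); simpl; lra.
    + rewrite opp_IZR, minus_IZR. lra.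
Qed.

End F.

Lemma arc_congr F a b c d c' d' :
  same_S c c' -> same_S d d' -> maps_arc_onto F a b c d -> maps_arc_onto F a b c' d'.
Proof.
  intros [k Hk] [l Hl] H y. specialize (H y). unfold in_arc in *.
  replace (y - c') with ((y - c) + IZR k) by lra.
  replace (d' - c') with ((d - c) + IZR (k - l)) by (rewrite minus_IZR; lra).
  rewrite !frac_shift. exact H.
Qed.

Theorem lemma6 (g : R -> vec) (F : R -> R) :
  ideal_trefoil g ->
  constant_speed g ->
  trefoil_symmetric_at_0 g ->
  contact_function g F ->
  same_S (sseq F 9) 0 ->
  (rep (sseq F 0) = 0 /\
   rep (sseq F 0) < rep (sseq F 7) /\ rep (sseq F 7) < rep (sseq F 5) /\
   rep (sseq F 5) < rep (sseq F 3) /\ rep (sseq F 3) < rep (sseq F 1) /\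
   rep (sseq F 1) < rep (sseq F 8) /\ rep (sseq F 8) < rep (sseq F 6) /\
   rep (sseq F 6) < rep (sseq F 4) /\ rep (sseq F 4) < rep (sseq F 2)) ->
  (forall i j : nat,
     maps_arc_onto F (sseq F i) (sseq F j) (sseq F (S i)) (sseq F (S j))) /\
  (* alpha1 -> beta1~ -> beta3 -> alpha3 -> beta3~ -> beta2 -> alpha2
     -> beta2~ -> beta1 -> alpha1 *)
  maps_arc_onto F (sseq F 1) (sseq F 8) (sseq F 2) (sseq F 0) /\
  maps_arc_onto F (sseq F 2) (sseq F 0) (sseq F 3) (sseq F 1) /\
  maps_arc_onto F (sseq F 3) (sseq F 1) (sseq F 4) (sseq F 2) /\
  maps_arc_onto F (sseq F 4) (sseq F 2) (sseq F 5) (sseq F 3) /\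
  maps_arc_onto F (sseq F 5) (sseq F 3) (sseq F 6) (sseq F 4) /\
  maps_arc_onto F (sseq F 6) (sseq F 4) (sseq F 7) (sseq F 5) /\
  maps_arc_onto F (sseq F 7) (sseq F 5) (sseq F 8) (sseq F 6) /\
  maps_arc_onto F (sseq F 8) (sseq F 6) (sseq F 0) (sseq F 7) /\
  maps_arc_onto F (sseq F 0) (sseq F 7) (sseq F 1) (sseq F 8).
Proof.
  intros _ _ _ [Hcont [Hwd [Hinj [_ [Hmono _]]]]] H9 _.
  assert (M : forall i j, maps_arc_onto F (sseq F i) (sseq F j) (sseq F (S i)) (sseq F (S j))).
  { intros i j. apply (main_arc F Hcont Hwd Hinj Hmono). }
  assert (E9 : same_S (sseq F 9) (sseq F 0)) by exact H9.
  assert (R : forall c, same_S c c) by (intro c; exists 0%Z; simpl; ring).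
  split; [exact M|].
  exact (conj (arc_congr _ _ _ _ _ _ _ (R _) E9 (M 1%nat 8%nat))
   (conj (M 2%nat 0%nat) (conj (M 3%nat 1%nat) (conj (M 4%nat 2%nat)
   (conj (M 5%nat 3%nat) (conj (M 6%nat 4%nat) (conj (M 7%nat 5%nat)
   (conj (arc_congr _ _ _ _ _ _ _ E9 (R _) (M 8%nat 6%nat)) (M 0%nat 7%nat))))))))).
Qed.
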